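(* Let $f^0=0,f^1=0,\dots,f^r=0$ be DAEs in size $n$ such that, for each $k\in[r]$, $f^k$ is obtained from $f^{k-1}$ as $f^k(y,\dot y,\dots,t)=U^k(D_t)\,f^{k-1}(V^k(D_t)y,V^k(D_t)\dot y,\dots,t)$ with $U^k(D_t)=\operatorname{diag}\{D_t^{-p^k_i}\}U^k\operatorname{diag}\{D_t^{p^k_i}\}$, $V^k(D_t)=\operatorname{diag}\{D_t^{-q^k_i}\}V^k\operatorname{diag}\{D_t^{q^k_i}\}$, where $(p^k,q^k)$ is an optimal solution to $(\mathrm{D}_{f^{k-1}})$ and $U^k,V^k\in\mathbb{R}^{n\times n}$ are nonsingular, $U^k$ upper-triangular along $p^k$, $V^k$ upper-triangular along $q^k$, with $\operatorname{trank}(U^kJ_{f^{k-1}}^{p^k,q^k}V^k)<n$; and suppose $f^r=0$ is structurally nonsingular with system Jacobian not identically singular. Define the DAE $f^*=0$ of size $2n$ in the variable $(x(t),z(t))$ by $f^*_i=f^r_i(z,\dot z,\dots,t)$ and $f^*_{n+i}=x_i-\big(V^1(D_t)\cdots V^r(D_t)z\big)_i$ for $i\in[n]$. Then the system Jacobian of $f^*=0$ is nonsingular, i.e. $\det J_{f^*}^{p,q}\not\equiv0$ for an optimal solution $(p,q)$ of $(\mathrm{D}_{f^*})$.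
   Context: A DAE is $f(x,\dot x,\dots,x^{(k)},t)=0$ with $f$ smooth. Its $\sigma$-function is $\sigma_f(i,j)=\max\{l\in\mathbb{Z}_{\ge0}:\partial f_i/\partial x_j^{(l)}\not\equiv0\}$ ($\max\emptyset=-\infty$). $(\mathrm{D}_f)$: minimize $\sum_j q_j-\sum_i p_i$ subject to $q_j-p_i\ge\sigma_f(i,j)$, $p_i,q_j\in\mathbb{Z}_{\ge0}$; $\hat\delta_f$ denotes its optimal value ($-\infty$ if infeasible), and $f=0$ is structurally nonsingular if $\hat\delta_f\ne-\infty$. For optimal $(p,q)$ the system Jacobian is $J_f^{p,q}=\big(\partial f_i/\partial x_j^{(q_j-p_i)}\big)_{ij}$; it is nonsingular if its determinant is not identically zero (this does not depend on the choice of optimal $(p,q)$). $\operatorname{trank}$ is the term-rank (maximum number of not-identically-zero entries with no two in a common row or column). A matrix $U$ is upper-triangular along $p$ if $U_{ij}=0$ whenever $p_i>p_j$. $D_t=\mathrm{d}/\mathrm{d}t$, and the matrices $U^k(D_t),V^k(D_t)$ have entries polynomial in $D_t$. *)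

(* Defs.v *)
From HB Require Import structures.
From mathcomp Require Import all_boot all_order all_algebra.
From mathcomp Require Import boolp classical_sets fsbigop reals topology normedtype derive.

Set Implicit Arguments.
Unset Strict Implicit.
Unset Printing Implicit Defensive.
Import Order.TTheory GRing.Theory Num.Theory.
Import numFieldNormedType.Exports.
Local Open Scope ring_scope.

Section DAE.
Variable R : realType.

(** Jet coordinates of n unknowns: [X l j] is the value of x_j^{(l)}. *)
Definition Jet (n : nat) := nat -> 'I_n -> R.

Definition jfun (n : nat) := Jet n -> R -> R.

Definition DAE (n : nat) := 'I_n -> jfun n.

Definition upd n (X : Jet n) (l : nat) (j : 'I_n) (s : R) : Jet n :=
  fun l' j' => if (l' == l) && (j' == j) then s else X l' j'.

Definition pd n (g : jfun n) (l : nat) (j : 'I_n) : jfun n :=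
  fun X t => derive1 (fun s => g (upd X l j s) t) (X l j).

Definition pdt n (g : jfun n) : jfun n :=
  fun X t => derive1 (fun s => g X s) t.

Definition pdir n (g : jfun n) (d : option (nat * 'I_n)) : jfun n :=
  match d with None => pdt g | Some (l, j) => pd g l j end.

Definition derivable_dir n (g : jfun n) (d : option (nat * 'I_n)) X t : Prop :=
  match d with
  | None => derivable (fun s => g X s) t 1
  | Some (l, j) => derivable (fun s => g (upd X l j s) t) (X l j) 1
  end.

Definition iter_pd n (g : jfun n) (ds : seq (option (nat * 'I_n))) : jfun n :=
  foldr (fun d h => pdir h d) g ds.

Definition depends_upto n (K : nat) (g : jfun n) : Prop :=
  forall X Y t, (forall l j, (l <= K)%N -> X l j = Y l j) -> g X t = g Y t.

Definition jcont n (g : jfun n) : Prop :=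
  forall X t (e : R), 0 < e -> exists2 d : R, 0 < d &
    forall Y s, (forall l j, `|Y l j - X l j| < d) -> `|s - t| < d ->
      `|g Y s - g X t| < e.

Definition smooth n (g : jfun n) : Prop :=
  (exists K, depends_upto K g) /\
  forall ds, jcont (iter_pd g ds) /\
             forall d X t, derivable_dir (iter_pd g ds) d X t.

Definition smoothDAE n (f : DAE n) : Prop := forall i, smooth (f i).

Definition nz n (g : jfun n) : Prop := exists X t, g X t != 0.

(** Total time derivative D_t g = dg/dt + sum_{l,j} dg/dx_j^{(l)} x_j^{(l+1)}
    (finitely supported sum over l). *)
Definition Dt n (g : jfun n) : jfun n :=
  fun X t => pdt g X t +
    \sum_(l \in [set: nat]) \sum_(j < n) pd g l j X t * X l.+1 j.

(** Feasibility for (D_f): q_j - p_i >= sigma_f(i,j), i.e. q_j - p_i >= l for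
    every l with d f_i / d x_j^{(l)} not identically zero. *)
Definition feasible n (f : DAE n) (p q : 'I_n -> nat) : Prop :=
  forall i j l, nz (pd (f i) l j) -> (l + p i <= q j)%N.

Definition dobj n (p q : 'I_n -> nat) : int :=
  ((\sum_j q j)%N%:Z - (\sum_i p i)%N%:Z)%R.

Definition optimal n (f : DAE n) (p q : 'I_n -> nat) : Prop :=
  feasible f p q /\
  forall p' q', feasible f p' q' -> (dobj p q <= dobj p' q')%R.

(** Structural nonsingularity: hat delta_f <> -oo, i.e. (D_f) has an
    optimal solution (its optimum is finite). *)
Definition struct_nonsingular n (f : DAE n) : Prop :=
  exists p q, optimal f p q.

Definition sysJ n (f : DAE n) (p q : 'I_n -> nat) (i j : 'I_n) : jfun n :=
  fun X t => if (p i <= q j)%N then pd (f i) (q j - p i) j X t else 0.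

Definition sysJ_det_nz n (f : DAE n) (p q : 'I_n -> nat) : Prop :=
  exists X t, \det (\matrix_(i, j) sysJ f p q i j X t) != 0.

Definition is_matching n (M : 'I_n -> 'I_n -> jfun n) (S : {set 'I_n * 'I_n}) :=
  (forall e, e \in S -> nz (M e.1 e.2)) /\
  {in S &, forall e1 e2, e1.1 = e2.1 \/ e1.2 = e2.2 -> e1 = e2}.

Definition trank n (M : 'I_n -> 'I_n -> jfun n) : nat :=
  \max_(S : {set 'I_n * 'I_n} | `[< is_matching M S >]) #|S|.

Definition UJV n (U V : 'M[R]_n) (J : 'I_n -> 'I_n -> jfun n) :
  'I_n -> 'I_n -> jfun n :=
  fun i j X t => \sum_(a < n) \sum_(b < n) U i a * J a b X t * V b j.

Definition upper_along n (U : 'M[R]_n) (p : 'I_n -> nat) : Prop :=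
  forall i j, (p j < p i)%N -> U i j = 0.

(** (U(D_t) g)_i = sum_j U_ij D_t^{p_j - p_i} g_j,
    U(D_t) = diag{D_t^{-p_i}} U diag{D_t^{p_i}}. *)
Definition applyU n (U : 'M[R]_n) (p : 'I_n -> nat) (g : DAE n) : DAE n :=
  fun i X t => \sum_(j < n)
    (if (p i <= p j)%N then U i j * iter (p j - p i) (@Dt n) (g j) X t else 0).

(** Jet of V(D_t) y from the jet Y of y:
    (V(D_t) y)_i^{(l)} = sum_j V_ij y_j^{(q_j - q_i + l)}. *)
Definition substV n (V : 'M[R]_n) (q : 'I_n -> nat) (Y : Jet n) : Jet n :=
  fun l i => \sum_(j < n)
    (if (q i <= q j)%N then V i j * Y (q j - q i + l)%N j else 0).

Definition transformDAE n (U : 'M[R]_n) (p : 'I_n -> nat)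
    (V : 'M[R]_n) (q : 'I_n -> nat) (f : DAE n) : DAE n :=
  applyU U p (fun i Y t => f i (substV V q Y) t).

(** Jet of V^1(D_t) ... V^r(D_t) z. *)
Definition compV n (r : nat) (V : nat -> 'M[R]_n) (q : nat -> 'I_n -> nat)
    (Z : Jet n) : Jet n :=
  foldr (fun k acc => substV (V k) (q k) acc) Z (iota 1 r).

(** The DAE f^* of size 2n in the variable (x, z): indices lshift = x, rshift = z;
    equations lshift i: f^r_i(z, ...), rshift i: x_i - (V^1(D_t)...V^r(D_t) z)_i. *)
Definition fstar n (r : nat) (fr : DAE n) (V : nat -> 'M[R]_n)
    (q : nat -> 'I_n -> nat) : DAE (n + n) :=
  fun i W t =>
    let Z : Jet n := fun l j => W l (rshift n j) in
    match split i with
    | inl i' => fr i' Z t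
    | inr i' => W 0%N (lshift n i') - compV r V q Z 0%N i'
    end.

End DAE.

(* Main.v *)
Require Import Defs.
From HB Require Import structures.
From mathcomp Require Import all_boot all_order all_algebra.
From mathcomp Require Import boolp classical_sets fsbigop reals topology normedtype derive.
From mathcomp Require Import zify perm.
Import Order.TTheory GRing.Theory Num.Theory.
Local Open Scope ring_scope.

Section Gen.
Variables (R : realType) (m : nat) (f : DAE R m).


Definition ent_nz (p q : 'I_m -> nat) i j :=
  (p i <= q j)%N /\ nz (pd (f i) (q j - p i) j).

Lemma ent0 {p q i j} : ~ ent_nz p q i j -> forall X t, sysJ f p q i j X t = 0.
Proof.
move=> hn X t; rewrite /sysJ; case: ifP => h //.
apply/eqP; apply/negP => /negP H0; apply: hn; split => //; by exists X, t.
Qed.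

Lemma supp_le {p q p' q'} {s : 'I_m -> 'I_m} : injective s ->
  (forall i, ent_nz p q i (s i)) -> feasible f p' q' ->
  (\sum_i (q (s i) - p i + p' i) <= \sum_i q' (s i))%N /\
  ((\sum_j q j) + \sum_i p' i = \sum_i (q (s i) - p i + p' i) + \sum_i p i)%N /\
  ((\sum_j q' j) = \sum_i q' (s i))%N.
Proof.
move=> si hs hf; split; last split.
- apply: leq_sum => i _; have [h1 h2] := hs i; exact: hf h2.
- rewrite (reindex_inj si) /= -!big_split /=; apply: eq_bigr => i _.
  have [h1 _] := hs i; lia.
- by rewrite (reindex_inj si).
Qed.

Lemma supp_opt {p q p' q'} {s : 'I_m -> 'I_m} : injective s ->
  (forall i, ent_nz p q i (s i)) -> feasible f p' q' ->
  (dobj p q <= dobj p' q')%R.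
Proof.
move=> si hs hf; have [h1 [h2 h3]] := supp_le si hs hf.
rewrite /dobj; lia.
Qed.

Lemma supp_eq {p q p' q'} {s : 'I_m -> 'I_m} : injective s ->
  (forall i, ent_nz p q i (s i)) -> feasible f p' q' ->
  dobj p q = dobj p' q' ->
  forall i, (p' i <= q' (s i))%N /\ (q (s i) - p i = q' (s i) - p' i)%N.
Proof.
move=> si hs hf he; have [h1 [h2 h3]] := supp_le si hs hf.
have hsum : (\sum_i (q (s i) - p i + p' i) = \sum_i q' (s i))%N.
  move: he; rewrite /dobj; lia.
have L : forall i, true -> (q (s i) - p i + p' i <= q' (s i) ?= iff
           (q (s i) - p i + p' i == q' (s i)))%N.
  move=> i _; apply: leqif_eq; have [_ h] := hs i; exact: hf h.
move: (leqif_sum L) => -[_]; rewrite hsum eqxx => /esym hall i.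
move/forall_inP: hall => /(_ i isT) /eqP e; lia.
Qed.

Lemma det_supp {p q X t} : \det (\matrix_(i, j) sysJ f p q i j X t) != 0 ->
  exists s : 'S_m, forall i, ent_nz p q i (s i).
Proof.
move=> hd; apply: contrapT => hn; move: hd; apply/negP; rewrite negbK.
apply/eqP; rewrite /determinant; apply: big1 => s _.
have /existsNP [i hi] : ~ (forall i, ent_nz p q i (s i)) by move=> h; apply: hn; exists s.
by rewrite (bigD1 i) //= mxE (ent0 hi) mul0r mulr0.
Qed.

Lemma opt_of_det p q : feasible f p q -> sysJ_det_nz f p q -> optimal f p q.
Proof.
move=> hf [X [t hd]]; have [s hs] := det_supp hd.
split => // p' q' hf'; exact: (supp_opt (@perm_inj _ s) hs hf').
Qed.

Lemma prod_zero {p q} {s : 'S_m} {X t} : ~ (forall i, ent_nz p q i (s i)) ->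
  \prod_i (\matrix_(i, j) sysJ f p q i j X t) i (s i) = 0.
Proof.
move=> /existsNP [i hi].
by rewrite (bigD1 i) //= mxE (ent0 hi) mul0r.
Qed.

Lemma prod_eq p q p' q' (s : 'S_m) X t : optimal f p q -> optimal f p' q' ->
  (forall i, ent_nz p q i (s i)) ->
  \prod_i (\matrix_(i, j) sysJ f p q i j X t) i (s i) =
  \prod_i (\matrix_(i, j) sysJ f p' q' i j X t) i (s i).
Proof.
move=> [hf ho] [hf' ho'] hs.
have he : dobj p q = dobj p' q' by apply/eqP; rewrite eq_le ho // ho'.
have H := supp_eq (@perm_inj _ s) hs hf' he.
apply: eq_bigr => i _; rewrite !mxE /sysJ.
have [h1 _] := hs i; have [h2 h3] := H i.
by rewrite h1 h2 h3.
Qed.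

Lemma det_inv p q p' q' X t : optimal f p q -> optimal f p' q' ->
  \det (\matrix_(i, j) sysJ f p q i j X t) =
  \det (\matrix_(i, j) sysJ f p' q' i j X t).
Proof.
move=> ho ho'; rewrite /determinant; apply: eq_bigr => s _; congr (_ * _).
have [A|nA] := pselect (forall i, ent_nz p q i (s i)); first exact: prod_eq.
have [B|nB] := pselect (forall i, ent_nz p' q' i (s i)).
  by rewrite (prod_eq _ _ _ _ _ _ _ ho' ho B).
by rewrite !prod_zero.
Qed.

End Gen.

Lemma split_l m n (i : 'I_m) : split (lshift n i) = inl i.
Proof. exact: (unsplitK (inl i)). Qed.
Lemma split_r m n (i : 'I_n) : split (rshift m i) = inr i.
Proof. exact: (unsplitK (inr i)). Qed.

Section Spec.
Variables (R : realType) (n r : nat) (fr : DAE R n) (V : nat -> 'M[R]_n)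
  (q : nat -> 'I_n -> nat).

Definition Zof (W : Jet R (n + n)) : Jet R n := fun l j => W l (rshift n j).

Lemma Zof_upd_r W l j s : Zof (upd W l (rshift n j) s) = upd (Zof W) l j s.
Proof. by apply/funext => l'; apply/funext => j'; rewrite /Zof /upd eq_rshift. Qed.

Lemma Zof_upd_l W l j s : Zof (upd W l (lshift n j) s) = Zof W.
Proof. by apply/funext => l'; apply/funext => j'; rewrite /Zof /upd eq_rlshift andbF. Qed.

Lemma pd_const m (g : jfun R m) l j X t :
  (forall s, g (upd X l j s) t = g X t) -> pd g l j X t = 0.
Proof.
move=> h; rewrite /pd.
have -> : (fun s => g (upd X l j s) t) = functions.cst (g X t) by apply/funext => s; exact: h.
by rewrite derive1E derive_cst.
Qed.

Let fs := fstar r fr V q.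

Lemma fs_l i W t : fs (lshift n i) W t = fr i (Zof W) t.
Proof. by rewrite /fs /fstar split_l. Qed.

Lemma fs_r i W t : fs (rshift n i) W t = W 0%N (lshift n i) - compV r V q (Zof W) 0%N i.
Proof. by rewrite /fs /fstar split_r. Qed.

Lemma pd_l i l j W t : pd (fs (lshift n i)) l (rshift n j) W t = pd (fr i) l j (Zof W) t.
Proof.
rewrite /pd.
have -> : (fun s => fs (lshift n i) (upd W l (rshift n j) s) t) =
  (fun s => fr i (upd (Zof W) l j s) t).
  by apply/funext => s; rewrite fs_l Zof_upd_r.
by [].
Qed.

Lemma foldV_local (s : seq nat) : exists B, forall (Z Z' : Jet R n) L,
  (forall l j, (l <= L + B)%N -> Z l j = Z' l j) ->
  forall l i, (l <= L)%N ->
  foldr (fun k acc => substV (V k) (q k) acc) Z s l i =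
  foldr (fun k acc => substV (V k) (q k) acc) Z' s l i.
Proof.
elim: s => [|k s [B IH]].
  by exists 0%N => Z Z' L h l i hl /=; apply: h; rewrite addn0.
exists (B + \max_j q k j)%N => Z Z' L h l i hl /=.
rewrite /substV; apply: eq_bigr => j _; case: ifP => // hq.
congr (_ * _); apply: (IH _ _ (L + \max_j q k j)%N).
  by move=> l' j' hl'; apply: h; lia.
have := @leq_bigmax _ (fun j => q k j) j; lia.
Qed.

Lemma compV_local : exists B, forall (Z Z' : Jet R n),
  (forall l j, (l <= B)%N -> Z l j = Z' l j) ->
  forall i, compV r V q Z 0%N i = compV r V q Z' 0%N i.
Proof.
have [B H] := foldV_local (iota 1 r).
by exists B => Z Z' h i; apply: (H _ _ 0%N) => //; rewrite add0n.
Qed.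

End Spec.

Theorem theorem5 (R : realType) (n r : nat) (f : nat -> DAE R n)
    (U V : nat -> 'M[R]_n) (p q : nat -> 'I_n -> nat) :
  (forall k, (k <= r)%N -> smoothDAE (f k)) ->
  (forall k, (1 <= k <= r)%N ->
     [/\ optimal (f k.-1) (p k) (q k),
         \det (U k) != 0 /\ \det (V k) != 0,
         upper_along (U k) (p k) /\ upper_along (V k) (q k),
         (trank (UJV (U k) (V k) (sysJ (f k.-1) (p k) (q k))) < n)%N &
         f k = transformDAE (U k) (p k) (V k) (q k) (f k.-1)]) ->
  struct_nonsingular (f r) ->
  (exists pr qr, optimal (f r) pr qr /\ sysJ_det_nz (f r) pr qr) ->
  let fs := fstar r (f r) V q in
  struct_nonsingular fs /\
  forall ps qs, optimal fs ps qs -> sysJ_det_nz fs ps qs.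
Proof.
move=> _ _ _ [pr [qr [[hfr hor] [X0 [t0 hd]]]]] fs; rewrite {}/fs.
have [B HB] := compV_local R n r V q.
pose ps : 'I_(n + n) -> nat := fun i =>
  match split i with inl i' => (pr i' + B)%N | inr _ => 0%N end.
pose qs : 'I_(n + n) -> nat := fun j =>
  match split j with inl _ => 0%N | inr j' => (qr j' + B)%N end.
have hfs : feasible (fstar r (f r) V q) ps qs.
  move=> i j l; rewrite -(splitK i) -(splitK j).
  case: (split i) => i'; case: (split j) => j' /= [X [t h]];
    rewrite /ps /qs ?split_l ?split_r.
  - exfalso; move: h; rewrite pd_const ?eqxx // => s.
    by rewrite !fs_l Zof_upd_l.
  - rewrite pd_l in h.
    have hn : nz (pd (f r i') l j') by exists (Zof R n X), t.
    have := hfr _ _ _ hn; lia.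
  - case: l h => [|l] h; first by [].
    exfalso; move: h; rewrite pd_const ?eqxx // => s.
    by rewrite !fs_r Zof_upd_l /upd /=.
  - case: (leqP l B) => hl; first lia.
    exfalso; move: h; rewrite pd_const ?eqxx // => s.
    rewrite !fs_r Zof_upd_r {1}/upd eq_lrshift andbF (HB _ (Zof R n X)) //.
    move=> l' k hl'; rewrite /upd.
    have /negbTE -> : l' != l by apply/eqP; lia.
    by [].
pose W0 : Jet R (n + n) := fun l k =>
  match split k with inl _ => 0 | inr k' => X0 l k' end.
have ZW : Zof R n W0 = X0.
  by apply/funext => l; apply/funext => k; rewrite /Zof /W0 split_r.
have hdet' : \det (\matrix_(i, j) sysJ (fstar r (f r) V q) ps qs i j W0 t0) != 0.
  set M := \matrix_(i, j) _.
  pose J := \matrix_(i, j) sysJ (f r) pr qr i j X0 t0.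
  have eM : M = block_mx 0 J 1%:M (drsubmx M).
    rewrite -[M in LHS]submxK; congr block_mx; apply/matrixP => i j;
      rewrite !mxE /sysJ /ps /qs ?split_l ?split_r.
    - case: ifP => // _; rewrite pd_const // => s.
      by rewrite !fs_l Zof_upd_l.
    - by rewrite leq_add2r subnDr pd_l ZW.
    - rewrite leqnn subnn.
      case: (eqVneq i j) => [<-|nij].
        rewrite /pd.
        have -> : (fun s : R => fstar r (f r) V q (rshift n i)
                     (upd W0 0 (lshift n i) s) t0) =
                  shift (- compV r V q X0 0%N i).
          by apply/funext => s; rewrite fs_r Zof_upd_l ZW /upd !eqxx.
        rewrite derive1E.
        have E := derive_shift (R:=R) 1 (- compV r V q X0 0%N i).
        exact: (congr1 (fun F => F (W0 0%N (lshift n i))) E).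
      rewrite pd_const // => s.
      by rewrite !fs_r Zof_upd_l /upd eq_lshift (negbTE nij) andbF.
  have eP : block_mx 0 J 1%:M (drsubmx M) =
    block_mx 0 1%:M 1%:M 0 *m block_mx 1%:M (drsubmx M) 0 J.
    by rewrite mulmx_block !mul0mx !mul1mx ?mulmx0 ?addr0 ?add0r.
  have hPP : \det (block_mx (0 : 'M[R]_n) 1%:M 1%:M 0) *
             \det (block_mx (0 : 'M[R]_n) 1%:M 1%:M 0) = 1.
    rewrite -det_mulmx mulmx_block !mul0mx !mul1mx ?addr0 ?add0r.
    by rewrite -scalar_mx_block det1.
  rewrite eM eP det_mulmx det_ublock det1 mul1r mulf_neq0 //.
  apply/eqP => h0; move: hPP; rewrite h0 mul0r => /eqP; rewrite eq_sym oner_eq0.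
  by [].
have hdet : sysJ_det_nz (fstar r (f r) V q) ps qs by exists W0, t0.
have hos := @opt_of_det _ _ _ _ _ hfs hdet.
split; first by exists ps, qs.
move=> ps' qs' ho'; exists W0, t0.
by rewrite (@det_inv _ _ _ _ _ _ _ _ _ ho' hos).
Qed.
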